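(* The generating function $$F_{(123,132)}(x,p,q,u,v,s,t)=\sum_{n\ge0}\ \sum_{\pi\in S_n(123,132)} x^n p^{\operatorname{asc}(\pi)}q^{\operatorname{des}(\pi)}u^{\operatorname{lrmax}(\pi)}v^{\operatorname{rlmax}(\pi)}s^{\operatorname{lrmin}(\pi)}t^{\operatorname{rlmin}(\pi)}$$ is equal to $$\frac{1 + q^2 s^2 v x^2 + s t u v x (1 + p t u x) - q s x \bigl(1 + p u v^2 x^2 s t(-1 + t)(-1 + u) + v (1 + p x + s t u x)\bigr)}{1 + q^2 s^2 v x^2 - q s x (1 + v + p v x)}.$$
   Context: For $n\ge 0$, $S_n$ denotes the set of permutations $\pi=\pi_1\cdots\pi_n$ of $[n]=\{1,\dots,n\}$ ($S_0$ consists of the empty permutation, for which all statistics are $0$). $\pi$ avoids a pattern $\tau\in S_k$ if no subsequence $\pi_{i_1}\cdots\pi_{i_k}$ ($i_1<\dots<i_k$) satisfies $\pi_{i_a}<\pi_{i_b}\iff\tau_a<\tau_b$; $S_n(\tau,\rho)$ is the set of permutations in $S_n$ avoiding both $\tau$ and $\rho$. $\operatorname{asc}(\pi)$ (resp. $\operatorname{des}(\pi)$) is the number of $i\in[n-1]$ with $\pi_i<\pi_{i+1}$ (resp. $\pi_i>\pi_{i+1}$). $\pi_i$ is a left-to-right maximum (resp. minimum) if it is larger (resp. smaller) than every $\pi_j$ with $j<i$, and a right-to-left maximum (resp. minimum) if it is larger (resp. smaller) than every $\pi_j$ with $j>i$; $\operatorname{lrmax},\operatorname{lrmin},\operatorname{rlmax},\operatorname{rlmin}$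 count these (so $\pi_1$ is always a left-to-right maximum and minimum, $\pi_n$ always a right-to-left maximum and minimum). *)

(* Defs.v *)
From HB Require Import structures.
From mathcomp Require Import all_boot all_order all_algebra all_fingroup.
Set Implicit Arguments. Unset Strict Implicit. Unset Printing Implicit Defensive.
Import GRing.Theory.

Definition pword n (sg : 'S_n) : seq nat := [seq val (sg i) | i <- enum 'I_n].

Definition same_pattern (s tau : seq nat) : bool :=
  (size s == size tau) &&
  [forall i : 'I_(size s), forall j : 'I_(size s),
     (nth 0 s i < nth 0 s j) == (nth 0 tau i < nth 0 tau j)].

Definition contains (w tau : seq nat) : bool :=
  [exists m : (size w).-tuple bool, same_pattern (mask m w) tau].

Definition avoids (w tau : seq nat) : bool := ~~ contains w tau.

Definition asc (w : seq nat) : nat :=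
  \sum_(i < (size w).-1) (nth 0 w i < nth 0 w i.+1).
Definition des (w : seq nat) : nat :=
  \sum_(i < (size w).-1) (nth 0 w i > nth 0 w i.+1).
Definition lrmax (w : seq nat) : nat :=
  \sum_(i < size w) all (fun j => nth 0 w j < nth 0 w i) (iota 0 i).
Definition lrmin (w : seq nat) : nat :=
  \sum_(i < size w) all (fun j => nth 0 w j > nth 0 w i) (iota 0 i).
Definition rlmax (w : seq nat) : nat :=
  \sum_(i < size w) all (fun j => nth 0 w j < nth 0 w i) (iota i.+1 (size w - i.+1)).
Definition rlmin (w : seq nat) : nat :=
  \sum_(i < size w) all (fun j => nth 0 w j > nth 0 w i) (iota i.+1 (size w - i.+1)).

(* Coefficient of x^n in F_{(123,132)}, with p,q,u,v,s,t in a commutative ring *)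
Definition Fcoef (R : comRingType) (p q u v s t : R) (n : nat) : R :=
  \sum_(sg : 'S_n | avoids (pword sg) [:: 0; 1; 2] && avoids (pword sg) [:: 0; 2; 1])
     p ^+ asc (pword sg) * q ^+ des (pword sg) * u ^+ lrmax (pword sg)
     * v ^+ rlmax (pword sg) * s ^+ lrmin (pword sg) * t ^+ rlmin (pword sg).

(* Main.v *)
Require Import Defs.
From HB Require Import structures.
From mathcomp Require Import all_boot all_order all_algebra all_fingroup.
From mathcomp Require Import zify ring.
Import GRing.Theory.

Fixpoint ascR (w : seq nat) : nat :=
  if w is x :: w' then (if w' is y :: _ then x < y else false) + ascR w' else 0.
Fixpoint desR (w : seq nat) : nat :=
  if w is x :: w' then (if w' is y :: _ then y < x else false) + desR w' else 0.
Fixpoint lrF (b : nat -> bool) (w : seq nat) : nat :=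
  if w is x :: w' then b x + lrF (fun y => b y && (x < y)) w' else 0.
Fixpoint lmF (b : nat -> bool) (w : seq nat) : nat :=
  if w is x :: w' then b x + lmF (fun y => b y && (y < x)) w' else 0.
Fixpoint rlMR (w : seq nat) : nat :=
  if w is x :: w' then all (fun y => y < x) w' + rlMR w' else 0.
Fixpoint rlmR (w : seq nat) : nat :=
  if w is x :: w' then all (fun y => x < y) w' + rlmR w' else 0.

Lemma all_iota_nth (P : pred nat) w :
  all (fun j => P (nth 0 w j)) (iota 0 (size w)) = all P w.
Proof. by rewrite -{3}(mkseq_nth 0 w) /mkseq all_map. Qed.

Lemma iota1 i n : iota i.+1 n = map S (iota i n).
Proof. by rewrite -add1n iotaDl; apply: eq_map => x; rewrite add1n. Qed.

Lemma ascE w : asc w = ascR w.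
Proof.
rewrite /asc; elim: w => [|x w IH] /=; first by rewrite big_ord0.
case: w IH => [|y w] IH; first by rewrite big_ord0.
rewrite big_ord_recl; congr (_ + _); rewrite -IH; apply: eq_bigr => i _ //.
Qed.

Lemma desE w : des w = desR w.
Proof.
rewrite /des; elim: w => [|x w IH] /=; first by rewrite big_ord0.
case: w IH => [|y w] IH; first by rewrite big_ord0.
rewrite big_ord_recl; congr (_ + _); rewrite -IH; apply: eq_bigr => i _ //.
Qed.

Lemma lrFE b w : \sum_(i < size w) (b (nth 0 w i) && all (fun j => nth 0 w j < nth 0 w i) (iota 0 i)) = lrF b w.
Proof.
elim: w b => [|x w IH] b /=; first by rewrite big_ord0.
rewrite big_ord_recl /= andbT -IH; congr (_ + _); apply: eq_bigr => i _ /=.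
by rewrite iota1 all_map /= andbA.
Qed.

Lemma lmFE b w : \sum_(i < size w) (b (nth 0 w i) && all (fun j => nth 0 w j > nth 0 w i) (iota 0 i)) = lmF b w.
Proof.
elim: w b => [|x w IH] b /=; first by rewrite big_ord0.
rewrite big_ord_recl /= andbT -IH; congr (_ + _); apply: eq_bigr => i _ /=.
by rewrite iota1 all_map /= andbA.
Qed.

Lemma lrmaxE w : lrmax w = lrF predT w.
Proof. by rewrite -lrFE. Qed.
Lemma lrminE w : lrmin w = lmF predT w.
Proof. by rewrite -lmFE. Qed.

Lemma rlmaxE w : rlmax w = rlMR w.
Proof.
rewrite /rlmax; elim: w => [|x w IH] /=; first by rewrite big_ord0.
rewrite big_ord_recl /= subSS subn0 iota1 all_map; congr (_ + _).
  by rewrite -(all_iota_nth (fun y => y < x)).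
rewrite -IH; apply: eq_bigr => i _.
by rewrite /bump leq0n add1n subSS iota1 all_map.
Qed.

Lemma rlminE w : rlmin w = rlmR w.
Proof.
rewrite /rlmin; elim: w => [|x w IH] /=; first by rewrite big_ord0.
rewrite big_ord_recl /= subSS subn0 iota1 all_map; congr (_ + _).
  by rewrite -(all_iota_nth (fun y => x < y)).
rewrite -IH; apply: eq_bigr => i _.
by rewrite /bump leq0n add1n subSS iota1 all_map.
Qed.


Fixpoint bad (w : seq nat) : bool :=
  if w is x :: w' then (1 < count (fun y => x < y) w') || bad w' else false.

Definition P3 (s : seq nat) : bool :=
  if s is [:: a; b; c] then [&& a < b, a < c & b != c] else false.

Lemma same_pat3 s :
  same_pattern s [:: 0; 1; 2] || same_pattern s [:: 0; 2; 1] = P3 s.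
Proof.
rewrite /same_pattern.
case: s => [|a [|b [|c [|d s]]]] //=.
apply/idP/idP.
- case/orP => /forallP H.
  + have H01 := forallP (H (@Ordinal 3 0 isT)) (@Ordinal 3 1 isT).
    have H02 := forallP (H (@Ordinal 3 0 isT)) (@Ordinal 3 2 isT).
    have H12 := forallP (H (@Ordinal 3 1 isT)) (@Ordinal 3 2 isT).
    move: H01 H02 H12 => /= /eqP -> /eqP -> /eqP H12.
    by rewrite /= neq_ltn H12.
  + have H01 := forallP (H (@Ordinal 3 0 isT)) (@Ordinal 3 1 isT).
    have H02 := forallP (H (@Ordinal 3 0 isT)) (@Ordinal 3 2 isT).
    have H21 := forallP (H (@Ordinal 3 2 isT)) (@Ordinal 3 1 isT).
    move: H01 H02 H21 => /= /eqP -> /eqP -> /eqP H21.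
    by rewrite /= neq_ltn H21 orbT.
- case/and3P => ab ac; rewrite neq_ltn => /orP [bc|cb].
  + apply/orP; left; apply/forallP => i; apply/forallP => j.
    case: i => [[|[|[|i]]] Hi] //; case: j => [[|[|[|j]]] Hj] //=; lia.
  + apply/orP; right; apply/forallP => i; apply/forallP => j.
    case: i => [[|[|[|i]]] Hi] //; case: j => [[|[|[|j]]] Hj] //=; lia.
Qed.

Lemma containsP w tau :
  reflect (exists s, subseq s w && same_pattern s tau) (contains w tau).
Proof.
apply: (iffP existsP) => [[m Hm]|[s /andP [/subseqP [m Hsz ->] Hp]]].
  by exists (mask m w); rewrite Hm mask_subseq.
have Hsz' : size m == size w by rewrite Hsz.
by exists (Tuple Hsz').
Qed.

Lemma bad_sub w : uniq w ->
  reflect (exists s, subseq s w && P3 s) (bad w).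
Proof.
elim: w => [|x w IH] /= Hu.
  by apply: (iffP idP) => // [[s /andP [/eqP -> //]]].
case/andP: Hu => xw wu; move/(_ wu): IH => IH.
apply: (iffP orP).
- case=> [Hc|/IH [s /andP [Hs Ps]]].
  + set f := filter (fun y => x < y) w.
    have : 1 < size f by rewrite size_filter.
    have fw : subseq f w by apply: filter_subseq.
    have fu : uniq f by apply: filter_uniq.
    have fx : all (fun y => x < y) f by apply: filter_all.
    case: f fw fu fx => [|b [|c f]] //= fw /andP [bcf _] /andP [xb /andP [xc _]] _.
    exists [:: x; b; c]; rewrite /= eqxx xb xc /=.
    have -> : b != c by apply: contra bcf => /eqP ->; rewrite mem_head.
    rewrite andbT; apply: subseq_trans fw; by rewrite /= !eqxx sub0seq.
  + exists s; rewrite Ps andbT; exact: (subseq_trans Hs (subseq_cons w x)).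
- case=> s; case: s => [|a [|b [|c [|d s]]]] /andP [Hs] //= /and3P [ab ac bc].
  move: Hs => /=.
  case: eqP => [<-|_] Hs.
  + left; rewrite -size_filter.
    have : subseq [:: b; c] (filter (fun y => a < y) w) by rewrite subseq_filter /= ab ac.
    by move/size_subseq.
  + by right; apply/IH; exists [:: a; b; c]; rewrite Hs /= ab ac.
Qed.

Lemma contains_bad w : uniq w ->
  (contains w [:: 0; 1; 2] || contains w [:: 0; 2; 1]) = bad w.
Proof.
move=> Hu; apply/idP/idP.
- case/orP => /containsP [s /andP [Hs Hp]]; apply/bad_sub => //; exists s;
    by rewrite Hs -same_pat3 Hp ?orbT.
- case/(bad_sub _ Hu) => s /andP [Hs]; rewrite -same_pat3 => /orP [H|H].
  + by apply/orP; left; apply/containsP; exists s; rewrite Hs.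
  + by apply/orP; right; apply/containsP; exists s; rewrite Hs.
Qed.

Definition rl k y := if y == k then k.+1 else y.
Definition relabel k (w : seq nat) := map (rl k) w.

Fixpoint gen n : seq (seq nat) :=
  if n is m.+1 then
    [seq m :: w | w <- gen m] ++
    (if m is k.+1 then [seq k :: relabel k w | w <- gen m] else [::])
  else [:: [::]].

Lemma iotaS0 n : iota 0 n.+1 = iota 0 n ++ [:: n].
Proof. by rewrite -addn1 iotaD. Qed.

Lemma cnt_iota x n : count (fun y => x < y) (iota 0 n) = n - x.+1.
Proof.
elim: n => [|n IH] //; rewrite iotaS0 count_cat IH /= addn0.
case: (ltnP x n) => H; rewrite ?H /=; lia.
Qed.

Lemma bad_map f w :
  (forall a b, a \in w -> b \in w -> (f a < f b) = (a < b)) -> bad (map f w) = bad w.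
Proof.
elim: w => [|x w IH] //= Hm.
rewrite IH; last by move=> a b Ha Hb; apply: Hm; rewrite inE ?Ha ?Hb orbT.
congr (leq 2 _ || _); rewrite count_map; apply: eq_in_count => y Hy /=.
by apply: Hm; rewrite inE ?eqxx ?Hy ?orbT.
Qed.

Lemma rl_mono k a b : a <= k -> b <= k -> (rl k a < rl k b) = (a < b).
Proof. rewrite /rl; case: eqP => Ha; case: eqP => Hb; lia. Qed.


Lemma perm_iotaS n : perm_eq (iota 0 n.+1) (n :: iota 0 n).
Proof. by rewrite iotaS0 cats1 perm_rcons. Qed.

Lemma map_rl_iota k : map (rl k) (iota 0 k) = iota 0 k.
Proof. apply: map_id_in => y; rewrite mem_iota /rl; case: eqP => //; lia. Qed.

Lemma perm_relabel k w : perm_eq w (iota 0 k.+1) ->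
  perm_eq (relabel k w) (k.+1 :: iota 0 k).
Proof.
move=> H; have := perm_map (rl k) H; rewrite iotaS0 /relabel map_cat map_rl_iota /= /rl eqxx.
by move=> H1; apply: (perm_trans H1); rewrite cats1 perm_rcons.
Qed.

Lemma gen_perm n w : w \in gen n -> perm_eq w (iota 0 n).
Proof.
elim: n w => [|n IH] w /=; first by rewrite inE => /eqP ->.
rewrite mem_cat => /orP [/mapP [w' Hw' ->]|].
  by rewrite perm_sym (perm_trans (perm_iotaS n)) // perm_cons perm_sym IH.
case: n IH => [|k] IH //; case/mapP => w' Hw' ->.
have H := perm_relabel _ _ (IH _ Hw').
apply: (perm_trans (y := k :: k.+1 :: iota 0 k)); first by rewrite perm_cons.
by rewrite -[X in perm_eq _ X]/(iota 0 k.+2) !iotaS0 -catA perm_sym perm_catC.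
Qed.

Lemma mem_cons_map n (L : seq (seq nat)) x w :
  (x :: w \in [seq n :: z | z <- L]) = (x == n) && (w \in L).
Proof.
by apply/mapP/andP => [[z Hz [-> ->]]|[/eqP -> H]]; [rewrite eqxx | exists w].
Qed.

Lemma mem_cons_map2 k (L : seq (seq nat)) x w :
  (x :: w \in [seq k :: relabel k z | z <- L]) = (x == k) && (w \in map (relabel k) L).
Proof.
apply/mapP/andP => [[z Hz [-> ->]]|[/eqP -> /mapP [z Hz ->]]].
  by rewrite eqxx map_f.
by exists z.
Qed.

Lemma iota2 k : perm_eq (k :: k.+1 :: iota 0 k) (iota 0 k.+2).
Proof. by rewrite !iotaS0 -catA perm_sym perm_catC. Qed.

Lemma perm_le w n y : perm_eq w (iota 0 n) -> y \in w -> y < n.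
Proof. by move=> Hp; rewrite (perm_mem Hp) mem_iota. Qed.
Arguments perm_le {w n y}.
Arguments gen_perm {n w}.

Lemma gen_char n w : perm_eq w (iota 0 n) -> (w \in gen n) = ~~ bad w.
Proof.
elim: n w => [|n IH] w Hp.
  by have := perm_size Hp; case: w Hp.
case: w Hp => [|x w'] Hp; first by have := perm_size Hp.
have Hx : x < n.+1 by apply: (perm_le Hp); rewrite mem_head.
have Hc : count (fun y => x < y) w' = n - x.
  by have := elimT seq.permP Hp (fun y => x < y); rewrite cnt_iota subSS /= ltnn add0n.
rewrite /= Hc mem_cat mem_cons_map.
have [xn|xn] := eqVneq x n.
  subst x; rewrite /= subnn /=.
  have Hp' : perm_eq w' (iota 0 n).
    by rewrite -(perm_cons n); apply: (perm_trans Hp); rewrite perm_iotaS.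
  rewrite -IH //; case: n {IH Hp Hx Hc} Hp' => [|k] Hp'; first by rewrite in_nil orbF.
  by rewrite mem_cons_map2 (_ : (k.+1 == k) = false) ?orbF //; lia.
case: n IH Hp Hx Hc xn => [|k] IH Hp Hx Hc xn; first by lia.
rewrite andFb orFb mem_cons_map2.
have [xk|xk] := eqVneq x k; last first.
  by rewrite andFb (_ : 1 < k.+1 - x) //; lia.
subst x; rewrite andTb subSn // subnn ltnn orFb.
have Hp' : perm_eq w' (k.+1 :: iota 0 k).
  by rewrite -(perm_cons k); apply: (perm_trans Hp); rewrite perm_sym iota2.
pose g y := if y == k.+1 then k else y.
set w'' := map g w'.
have Hrl : relabel k w'' = w'.
  rewrite /relabel /w'' -map_comp; apply: map_id_in => y Hy /=.
  move: Hy; rewrite (perm_mem Hp') inE mem_iota /g /rl.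
  case: (eqVneq y k.+1) => [->|H1]; rewrite ?eqxx //.
  case: eqP => //; lia.
have Hp'' : perm_eq w'' (iota 0 k.+1).
  have Hgi : map g (k.+1 :: iota 0 k) = k :: iota 0 k.
    rewrite map_cons {1}/g eqxx; congr (_ :: _).
    apply: map_id_in => y; rewrite mem_iota /g; case: eqP => //; lia.
  have := perm_map g Hp'; rewrite Hgi => H.
  apply: (perm_trans H); rewrite perm_sym; exact: perm_iotaS.
have -> : (w' \in map (relabel k) (gen k.+1)) = (w'' \in gen k.+1).
  apply/mapP/idP => [[z Hz Ew]|H]; last by exists w''; rewrite ?Hrl.
  rewrite /w'' Ew /relabel -map_comp map_id_in // => y Hy /=.
  have := perm_le (gen_perm Hz) Hy; rewrite /g /rl.
  case: (eqVneq y k) => [->|H1]; rewrite ?eqxx //.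
  case: eqP => //; lia.
rewrite IH //; congr (~~ _).
have E : bad w' = bad (relabel k w''); first by rewrite -{1}Hrl.
rewrite E.
rewrite /relabel [in RHS]bad_map // => a b Ha Hb.
by apply: rl_mono; rewrite -ltnS; apply: (perm_le Hp'').
Qed.

Lemma unrel k w : all (fun y => y <= k) w ->
  map (fun y => if y == k.+1 then k else y) (relabel k w) = w.
Proof.
move=> /allP H; rewrite /relabel -map_comp; apply: map_id_in => y /H Hy /=.
rewrite /rl; case: (eqVneq y k) => [->|H1]; rewrite ?eqxx //.
case: eqP => //; lia.
Qed.

Lemma gen_le k w : w \in gen k.+1 -> all (fun y => y <= k) w.
Proof. by move=> /gen_perm Hp; apply/allP => y /(perm_le Hp). Qed.
Arguments gen_le {k w}.

Lemma gen_uniq n : uniq (gen n).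
Proof.
elim: n => [|n IH] //.
case: n IH => [|k] IH //.
rewrite -[gen k.+2]/(map (cons k.+1) (gen k.+1) ++ map (fun w => k :: relabel k w) (gen k.+1)).
rewrite cat_uniq map_inj_uniq ?IH //=; last by move=> a b [].
apply/andP; split.
  apply/hasP => [[z /mapP [w _ ->] /mapP [w' _ [E _]]]]; lia.
rewrite map_inj_in_uniq // => a b Ha Hb [E].
by rewrite -(unrel _ _ (gen_le Ha)) E (unrel _ _ (gen_le Hb)).
Qed.

Lemma pword_uniq n (sg : 'S_n) : uniq (pword sg).
Proof. by rewrite /pword map_inj_uniq ?enum_uniq // => i j /val_inj /perm_inj. Qed.

Lemma pword_perm n (sg : 'S_n) : perm_eq (pword sg) (iota 0 n).
Proof.
apply: uniq_perm; [exact: pword_uniq | exact: iota_uniq | ] => x.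
rewrite mem_iota /=; apply/mapP/idP => [[i _ ->] | Hx]; first by rewrite ltn_ord.
by exists (sg^-1 (Ordinal Hx))%g; rewrite ?mem_enum // permKV.
Qed.

Lemma pword_ex n w : perm_eq w (iota 0 n) -> exists sg : 'S_n, pword sg = w.
Proof.
move=> H.
have Hs : size w = n by rewrite (perm_size H) size_iota.
have Hl : forall i : 'I_n, nth 0 w i < n.
  by move=> i; apply: (perm_le H); rewrite mem_nth // Hs.
have Hu : uniq w by rewrite (perm_uniq H) iota_uniq.
pose f i := Ordinal (Hl i).
have finj : injective f.
  move=> i j /(congr1 val) /= /eqP E; apply: val_inj; move: E.
  by rewrite nth_uniq ?Hs // => /eqP.
exists (perm finj); rewrite /pword.
transitivity [seq nth 0 w (val i) | i <- enum 'I_n].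
  by apply: eq_map => i; rewrite permE.
by rewrite (map_comp (nth 0 w) val) val_enum_ord -Hs; exact: mkseq_nth.
Qed.

Lemma pword_inj n : injective (@pword n).
Proof.
move=> s1 s2 E; apply/permP => i; apply: val_inj.
have := congr1 (fun w => nth 0 w i) E.
rewrite /pword !(nth_map i) -?enumT ?(nth_ord_enum i i) //.
all: by rewrite ?size_enum_ord // -?cardE ?card_ord.
Qed.

Definition Wt {R : comRingType} (p q u v s t : R) (w : seq nat) : R :=
  p ^+ asc w * q ^+ des w * u ^+ lrmax w * v ^+ rlmax w * s ^+ lrmin w * t ^+ rlmin w.

Lemma Fcoef_gen (R : comRingType) (p q u v s t : R) n :
  Fcoef p q u v s t n = (\sum_(w <- gen n) Wt p q u v s t w)%R.
Proof.
pose P (sg : 'S_n) := avoids (pword sg) [:: 0; 1; 2] && avoids (pword sg) [:: 0; 2; 1].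
have HP sg : P sg = ~~ bad (pword sg).
  by rewrite /P /avoids -negb_or contains_bad // pword_uniq.
have Hperm : perm_eq (gen n) [seq pword sg | sg <- index_enum 'S_n & P sg].
  apply: uniq_perm; first exact: gen_uniq.
    by rewrite map_inj_uniq ?filter_uniq ?index_enum_uniq //; exact: pword_inj.
  move=> w; apply/idP/mapP => [Hw | [sg]].
    have [sg Hsg] := pword_ex _ _ (gen_perm Hw).
    exists sg => //; rewrite mem_filter mem_index_enum andbT HP Hsg.
    by rewrite -(gen_char n) // (gen_perm Hw).
  rewrite mem_filter => /andP [HPs _] ->.
  by rewrite (gen_char n) ?pword_perm // -HP.
by rewrite (perm_big _ Hperm) big_map big_filter.
Qed.

Definition monoin (f : nat -> nat) (w : seq nat) :=
  forall a c, a \in w -> c \in w -> (f a < f c) = (a < c).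

Lemma monoin_cons f x w : monoin f (x :: w) -> monoin f w.
Proof. by move=> H a c Ha Hc; apply: H; rewrite inE ?Ha ?Hc orbT. Qed.

Lemma lrF_eq_in b1 b2 w : {in w, b1 =1 b2} -> lrF b1 w = lrF b2 w.
Proof.
elim: w b1 b2 => [|x w IH] b1 b2 //= H.
rewrite H ?mem_head //; congr (_ + _); apply: IH => y Hy /=.
by rewrite H // inE Hy orbT.
Qed.

Lemma lmF_eq_in b1 b2 w : {in w, b1 =1 b2} -> lmF b1 w = lmF b2 w.
Proof.
elim: w b1 b2 => [|x w IH] b1 b2 //= H.
rewrite H ?mem_head //; congr (_ + _); apply: IH => y Hy /=.
by rewrite H // inE Hy orbT.
Qed.

Lemma lrF_false b w : {in w, forall y, b y = false} -> lrF b w = 0.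
Proof.
elim: w b => [|x w IH] b //= H.
rewrite H ?mem_head // IH // => y Hy; by rewrite H ?inE ?Hy ?orbT.
Qed.

Lemma lrF_map f b w : monoin f w -> lrF b (map f w) = lrF (fun y => b (f y)) w.
Proof.
elim: w b => [|x w IH] b //= H.
congr (_ + _); rewrite IH; last exact: monoin_cons H.
apply: lrF_eq_in => y Hy /=; by rewrite H ?inE ?Hy ?eqxx ?orbT.
Qed.

Lemma lmF_map f b w : monoin f w -> lmF b (map f w) = lmF (fun y => b (f y)) w.
Proof.
elim: w b => [|x w IH] b //= H.
congr (_ + _); rewrite IH; last exact: monoin_cons H.
apply: lmF_eq_in => y Hy /=; by rewrite H ?inE ?Hy ?eqxx ?orbT.
Qed.

Lemma lrF_one k b w : k \in w -> all (fun y => y <= k) w ->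
  {in w, forall y, b y = (y == k)} -> lrF b w = 1.
Proof.
elim: w b => [|x w IH] b //= Hk /andP [xk Hw] H.
have [xe|xn] := eqVneq x k.
  subst x; rewrite H ?mem_head ?eqxx // lrF_false // => y Hy /=.
  by move/allP: Hw => /(_ y Hy); case: (b y) => //=; lia.
rewrite H ?mem_head // (negbTE xn) add0n; apply: IH => //.
  by move: Hk; rewrite inE eq_sym (negbTE xn).
move=> y Hy /=; rewrite H ?inE ?Hy ?orbT //.
case: eqP => // ->; lia.
Qed.

Lemma ascR_map f w : monoin f w -> ascR (map f w) = ascR w.
Proof.
elim: w => [|x w IH] //= H; rewrite IH; last exact: monoin_cons H.
by case: w H {IH} => [|y w] //= H; rewrite H ?inE ?eqxx ?orbT.
Qed.

Lemma desR_map f w : monoin f w -> desR (map f w) = desR w.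
Proof.
elim: w => [|x w IH] //= H; rewrite IH; last exact: monoin_cons H.
by case: w H {IH} => [|y w] //= H; rewrite H ?inE ?eqxx ?orbT.
Qed.

Lemma rlMR_map f w : monoin f w -> rlMR (map f w) = rlMR w.
Proof.
elim: w => [|x w IH] //= H; rewrite IH; last exact: monoin_cons H.
congr (nat_of_bool _ + _); rewrite all_map; apply: eq_in_all => y Hy /=.
by rewrite H ?inE ?eqxx ?Hy ?orbT.
Qed.

Lemma rlmR_map f w : monoin f w -> rlmR (map f w) = rlmR w.
Proof.
elim: w => [|x w IH] //= H; rewrite IH; last exact: monoin_cons H.
congr (nat_of_bool _ + _); rewrite all_map; apply: eq_in_all => y Hy /=.
by rewrite H ?inE ?eqxx ?Hy ?orbT.
Qed.

Lemma ascR_cons2 x y w : ascR (x :: y :: w) = (x < y) + ascR (y :: w).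
Proof. by []. Qed.
Lemma desR_cons2 x y w : desR (x :: y :: w) = (y < x) + desR (y :: w).
Proof. by []. Qed.
Lemma lrF_cons b x w : lrF b (x :: w) = b x + lrF (fun y => b y && (x < y)) w.
Proof. by []. Qed.
Lemma lmF_cons b x w : lmF b (x :: w) = b x + lmF (fun y => b y && (y < x)) w.
Proof. by []. Qed.
Lemma rlMR_cons x w : rlMR (x :: w) = all (fun y => y < x) w + rlMR w.
Proof. by []. Qed.
Lemma rlmR_cons x w : rlmR (x :: w) = all (fun y => x < y) w + rlmR w.
Proof. by []. Qed.

Definition V {R : comRingType} (p q v s t : R) (w : seq nat) : R :=
  (p ^+ asc w * q ^+ des w * v ^+ rlmax w * s ^+ lrmin w * t ^+ rlmin w)%R.

Lemma Wt_V (R : comRingType) (p q u v s t : R) w :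
  Wt p q u v s t w = (u ^+ lrmax w * V p q v s t w)%R.
Proof. rewrite /Wt /V; ring. Qed.

Lemma caseA (R : comRingType) (p q v s t : R) n w :
  all (fun y => y < n) w -> w != [::] ->
  lrmax (n :: w) = 1 /\ V p q v s t (n :: w) = (q * v * s * V p q v s t w)%R.
Proof.
move=> Hall Hne.
rewrite /V !ascE !desE !lrmaxE !rlmaxE !lrminE !rlminE.
case: w Hall Hne => [|y w] // Hall _.
have yn : y < n by move/allP: Hall; apply; rewrite mem_head.
rewrite ascR_cons2 desR_cons2 lrF_cons rlMR_cons lmF_cons rlmR_cons Hall yn.
have -> : (n < y) = false by rewrite ltnNge ltnW.
have -> : all (fun z => n < z) (y :: w) = false.
  by rewrite /= ltnNge ltnW.
split.
- rewrite lrF_false // => z Hz /=.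
  by move/allP: Hall => /(_ z Hz) H; rewrite ltnNge ltnW.
- have -> : lmF (fun y0 => predT y0 && (y0 < n)) (y :: w) = lmF predT (y :: w).
    by apply: lmF_eq_in => z Hz /=; move/allP: Hall => /(_ z Hz) ->.
  rewrite /= !add0n !add1n !exprS; ring.
Qed.

Lemma rl_gt k y : y <= k -> (k < rl k y) = (y == k).
Proof. rewrite /rl; case: eqP => [->|H] Hy; lia. Qed.

Lemma rl_lt k y : y <= k -> (rl k y < k) = (y < k).
Proof. rewrite /rl; case: eqP => [->|H] Hy; lia. Qed.

Lemma caseB (R : comRingType) (p q v s t : R) k w : perm_eq w (iota 0 k.+1) ->
  lrmax (k :: relabel k w) = 2 /\
  V p q v s t (k :: relabel k w) =
    ((if head 0 w == k then p else q * s) * t ^+ (k == 0) * V p q v s t w)%R.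
Proof.
move=> Hp.
have Hle : forall y, y \in w -> y <= k by move=> y /(perm_le Hp).
have Hk : k \in w by rewrite (perm_mem Hp) mem_iota; lia.
have Hm : monoin (rl k) w by move=> a c Ha Hc; apply: rl_mono; apply: Hle.
have Hrlmin : all (fun z => k < z) (relabel k w) = (k == 0).
  rewrite all_map; case: k Hp Hle Hk Hm => [|k] Hp Hle Hk Hm.
    by apply/allP => z Hz /=; rewrite rl_gt ?Hle //; move: (Hle z Hz); case: z Hz.
  apply/negbTE/negP => /allP /(_ 0) /=.
  have H0 : 0 \in w by rewrite (perm_mem Hp) mem_iota; lia.
  by move/(_ H0); rewrite rl_gt.
have Hrlmax : all (fun z => z < k) (relabel k w) = false.
  apply/negbTE/negP => /allP /(_ (rl k k)) H.
  by move: (H (map_f _ Hk)); rewrite /rl eqxx; lia.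
have Hlrmax : lrmax (k :: relabel k w) = 2.
  rewrite lrmaxE lrF_cons /relabel lrF_map //= (lrF_one k) //.
    by apply/allP.
  by move=> z Hz; rewrite rl_gt ?Hle.
split => //.
rewrite /V !ascE !desE !rlmaxE !lrminE !rlminE.
case: w Hp Hle Hk Hm Hrlmin Hrlmax {Hlrmax} => [|y r] // Hp Hle Hk Hm Hrlmin Hrlmax.
have Hy : y <= k by apply: Hle; rewrite mem_head.
have Erel : relabel k (y :: r) = rl k y :: relabel k r by [].
rewrite Erel ascR_cons2 desR_cons2 -Erel ascR_map // desR_map //.
rewrite rl_gt // rl_lt // rlMR_cons Hrlmax rlMR_map // rlmR_cons Hrlmin rlmR_map //.
rewrite lmF_cons /relabel lmF_map //.
have -> : lmF (fun z => predT (rl k z) && (rl k z < k)) (y :: r) = lmF (fun z => z < k) (y :: r).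
  by apply: lmF_eq_in => z Hz /=; rewrite rl_lt //; apply: Hle.
have Hl : (y == k) + lmF (fun z => z < k) (y :: r) = lmF predT (y :: r).
  rewrite !lmF_cons; case: (eqVneq y k) => [E|E].
    subst y; rewrite ltnn; congr (_ + _); apply: lmF_eq_in => z _ /=.
    by rewrite andbb.
  have yk : y < k by lia.
  rewrite yk add0n; congr (_ + _); apply: lmF_eq_in => z _ /=.
  by case: (ltnP z y) => H; rewrite ?andbF ?andbT //; lia.
rewrite -Hl.
set a := ascR (y :: r); set d := desR (y :: r); set M := rlMR (y :: r).
set m := rlmR (y :: r); set X := lmF (fun z => z < k) (y :: r).
rewrite [head _ _]/=.
case: (eqVneq y k) => [E|E].
  rewrite E ltnn [predT k]/= ?[nat_of_bool true]/= ?[nat_of_bool false]/= !add0n !add1n !exprS.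
  rewrite !exprD; ring.
have yk : y < k by lia.
rewrite yk [predT k]/= ?[nat_of_bool true]/= ?[nat_of_bool false]/= !add0n !add1n !exprS.
rewrite !exprD; ring.
Qed.

Lemma gen_SS k : gen k.+2 =
  map (cons k.+1) (gen k.+1) ++ map (fun w => k :: relabel k w) (gen k.+1).
Proof. by []. Qed.

Lemma gen_lt n w : w \in gen n -> all (fun y => y < n) w.
Proof. by move=> /gen_perm Hp; apply/allP => y /(perm_le Hp). Qed.

Lemma gen_ne n w : w \in gen n.+1 -> w != [::].
Proof. by move=> /gen_perm /perm_size; rewrite size_iota; case: w. Qed.

Arguments gen_lt {n w}.
Arguments gen_ne {n w}.
Arguments caseA {R} p q v s t {n w}.
Arguments caseB {R} p q v s t {k w}.

Section Rec.
Variables (R : comRingType) (p q u v s t : R).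
Local Open Scope ring_scope.

Definition Asum n := \sum_(w <- gen n) V p q v s t (n :: w).
Definition Bsum n := \sum_(w <- gen n) V p q v s t (n.-1 :: relabel n.-1 w).
Definition F n := Fcoef p q u v s t n.

Lemma F_SS k : F k.+2 = u * Asum k.+1 + u ^+ 2 * Bsum k.+1.
Proof.
rewrite /F Fcoef_gen gen_SS big_cat !big_map /Asum /Bsum !big_distrr.
congr (_ + _); apply: eq_big_seq => w Hw /=; rewrite Wt_V.
  by have [-> _] := caseA p q v s t (gen_lt Hw) (gen_ne Hw); rewrite expr1.
by have [-> _] := caseB p q v s t (gen_perm Hw).
Qed.

Lemma A_SS k : Asum k.+2 = q * v * s * (Asum k.+1 + Bsum k.+1).
Proof.
rewrite {1}/Asum (eq_big_seq (fun w => q * v * s * V p q v s t w)).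
  by rewrite -big_distrr gen_SS big_cat !big_map.
by move=> w Hw; have [_ ->] := caseA p q v s t (gen_lt Hw) (gen_ne Hw).
Qed.

Lemma B_SS k : Bsum k.+2 = p * Asum k.+1 + q * s * Bsum k.+1.
Proof.
rewrite {1}/Bsum (eq_big_seq (fun w => (if head 0 w == k.+1 then p else q * s) * V p q v s t w)).
  rewrite gen_SS big_cat !big_map /Asum /Bsum !big_distrr /=.
  congr (_ + _); apply: eq_bigr => w _ /=; rewrite ?eqxx //.
  by rewrite (_ : (k == k.+1) = false) //; lia.
move=> w Hw; have [_ ->] := caseB p q v s t (gen_perm Hw).
by rewrite /= expr0 mulr1.
Qed.

Lemma F0 : F 0 = 1.
Proof.
rewrite /F Fcoef_gen /= big_cons big_nil addr0 /Wt.
by rewrite !ascE !desE !lrmaxE !rlmaxE !lrminE !rlminE /= !expr0 !mulr1.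
Qed.

Lemma F1 : F 1 = u * v * s * t.
Proof.
rewrite /F Fcoef_gen /= big_cons big_nil addr0 /Wt.
rewrite !ascE !desE !lrmaxE !rlmaxE !lrminE !rlminE /=; ring.
Qed.

Lemma A1 : Asum 1 = q * v ^+ 2 * s ^+ 2 * t.
Proof.
rewrite /Asum /= big_cons big_nil addr0 /V.
rewrite !ascE !desE !rlmaxE !lrminE !rlminE /=; ring.
Qed.

Lemma B1 : Bsum 1 = p * v * s * t ^+ 2.
Proof.
rewrite /Bsum /= big_cons big_nil addr0 /V.
rewrite !ascE !desE !rlmaxE !lrminE !rlminE /=; ring.
Qed.

End Rec.

Local Open Scope ring_scope.

Theorem theorem3 (R : comRingType) (p q u v s t : R) (n : nat) :
  let N : {poly R} :=
    1 + (q ^+ 2 * s ^+ 2 * v)%:P * 'X ^+ 2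
      + (s * t * u * v)%:P * 'X * (1 + (p * t * u)%:P * 'X)
      - (q * s)%:P * 'X *
          (1 + (p * u * v ^+ 2 * s * t * (t - 1) * (u - 1))%:P * 'X ^+ 2
             + v%:P * (1 + p%:P * 'X + (s * t * u)%:P * 'X)) in
  let D : {poly R} :=
    1 + (q ^+ 2 * s ^+ 2 * v)%:P * 'X ^+ 2
      - (q * s)%:P * 'X * (1 + v%:P + (p * v)%:P * 'X) in
  \sum_(k < n.+1) D`_k * Fcoef p q u v s t (n - k) = N`_n.
Proof.
move=> N D.
have HD k : D`_k = if k == 0%N then 1 else if k == 1%N then - (q * s * (1 + v))
    else if k == 2%N then q ^+ 2 * s ^+ 2 * v - q * s * p * v else 0.
  rewrite /D -!mulrA !coefE.
  case: k => [|[|[|k]]] /=; ring.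
have HN k : N`_k = if k == 0%N then 1
    else if k == 1%N then s * t * u * v - q * s * (1 + v)
    else if k == 2%N then q ^+ 2 * s ^+ 2 * v + s * t * u * v * (p * t * u)
                          - q * s * (v * p + v * (s * t * u))
    else if k == 3%N then - (q * s * (p * u * v ^+ 2 * s * t * (t - 1) * (u - 1)))
    else 0.
  rewrite /N -!mulrA !coefE.
  case: k => [|[|[|[|k]]]] /=; ring.
have FSS k := F_SS R p q u v s t k; rewrite /F in FSS.
have AS k := A_SS R p q v s t k.
have BS k := B_SS R p q v s t k.
have F0' := F0 R p q u v s t; rewrite /F in F0'.
have F1' := F1 R p q u v s t; rewrite /F in F1'.
have HA1 := A1 R p q v s t.
have HB1 := B1 R p q v s t.
case: n => [|[|[|[|m]]]].
- by rewrite big_ord_recl big_ord0 HD HN /= F0'; ring.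
- rewrite !big_ord_recl big_ord0 !HD HN /= F0' F1'; ring.
- rewrite !big_ord_recl big_ord0 !HD HN /= F0' F1' FSS HA1 HB1; ring.
- rewrite !big_ord_recl big_ord0 !HD HN /= F0' F1' !FSS AS BS HA1 HB1; ring.
rewrite -(big_mkord xpredT (fun k => D`_k * Fcoef p q u v s t (m.+4 - k))).
rewrite !big_nat_recl // big1; last by move=> i _; rewrite HD /= mul0r.
rewrite !HD HN /= !subSS !subn0 !FSS !AS !BS ?AS; ring.
Qed.
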